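(* Let $T_1,T_2>0$ and $0<\tau<2\min(T_1,T_2)$. Let $R_1=\tau/\sqrt2$, $R_2=R_1+\tau$, $c_0=(T_1+\tau/2+R_1,\,T_2+\tau/2+R_1)$. For $p=(p_1,p_2)\in\mathbb{R}^2$ define the regions $S_{1,\alpha}=\{T_1+\tfrac\tau2<p_1<T_1+\tfrac\tau2+R_1,\ T_2+\tfrac\tau2<p_2<T_2+\tfrac\tau2+R_1,\ \|p-c_0\|<R_1\}$, $S_{1,1}=\{T_1+\tfrac\tau2<p_1<T_1+\tfrac\tau2+R_1,\ p_2>T_2+\tfrac\tau2+R_1\}$, $S_{1,2}=\{T_2+\tfrac\tau2<p_2<T_2+\tfrac\tau2+R_1,\ p_1>T_1+\tfrac\tau2+R_1\}$, $S_{1,3}=\{p_1>T_1+\tfrac\tau2+R_1,\ p_2>T_2+\tfrac\tau2+R_1\}$, $S_{0,\alpha}=\{p_1\le T_1+\tfrac\tau2+R_1,\ p_2\le T_2+\tfrac\tau2+R_1,\ \|p-c_0\|>R_2\}$, $S_{0,1}=\{p_1\le T_1-\tfrac\tau2,\ p_2>T_2+\tfrac\tau2+R_1\}$, $S_{0,2}=\{p_2\le T_2-\tfrac\tau2,\ p_1>T_1+\tfrac\tau2+R_1\}$, $S_{\tau,\alpha}=\{p_1\le T_1+\tfrac\tau2+R_1,\ p_2\le T_2+\tfrac\tau2+R_1,\ R_1\le\|p-c_0\|\le R_2\}$, $S_{\tau,1}=\{T_1-\tfrac\tau2\le p_1\le T_1+\tfrac\tau2,\ p_2>T_2+\tfrac\tau2+R_1\}$,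 $S_{\tau,2}=\{T_2-\tfrac\tau2\le p_2\le T_2+\tfrac\tau2,\ p_1>T_1+\tfrac\tau2+R_1\}$, and define $f_\tau(p)=1$ on $S_{1,\alpha}\cup S_{1,1}\cup S_{1,2}\cup S_{1,3}$, $f_\tau(p)=0$ on $S_{0,\alpha}\cup S_{0,1}\cup S_{0,2}$, $f_\tau(p)=\frac{R_2-\|p-c_0\|}{\tau}$ on $S_{\tau,\alpha}$, $f_\tau(p)=\frac{p_1-(T_1-\tau/2)}{\tau}$ on $S_{\tau,1}$, $f_\tau(p)=\frac{p_2-(T_2-\tau/2)}{\tau}$ on $S_{\tau,2}$. Then $f_\tau$ is $\frac1\tau$-Lipschitz with respect to the Euclidean norm: $|f_\tau(x)-f_\tau(x')|\le\frac1\tau\|x-x'\|$ for all $x,x'$ in the union of these regions.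
   Context: $\|\cdot\|$ is the Euclidean norm on $\mathbb{R}^2$. *)

(* Defs.v *)
From Stdlib Require Import Reals.
Open Scope R_scope.

Definition norm2 (p : R * R) : R := sqrt (fst p ^ 2 + snd p ^ 2).
Definition sub2 (p q : R * R) : R * R := (fst p - fst q, snd p - snd q).

Section Regions.
Variables (T1 T2 tau : R).
Definition R1 : R := tau / sqrt 2.
Definition R2 : R := R1 + tau.
Definition c0 : R * R := (T1 + tau / 2 + R1, T2 + tau / 2 + R1).

Definition S1a (p : R * R) : Prop :=
  T1 + tau/2 < fst p < T1 + tau/2 + R1 /\ T2 + tau/2 < snd p < T2 + tau/2 + R1
  /\ norm2 (sub2 p c0) < R1.
Definition S11 (p : R * R) : Prop :=
  T1 + tau/2 < fst p < T1 + tau/2 + R1 /\ snd p > T2 + tau/2 + R1.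
Definition S12 (p : R * R) : Prop :=
  T2 + tau/2 < snd p < T2 + tau/2 + R1 /\ fst p > T1 + tau/2 + R1.
Definition S13 (p : R * R) : Prop :=
  fst p > T1 + tau/2 + R1 /\ snd p > T2 + tau/2 + R1.
Definition S0a (p : R * R) : Prop :=
  fst p <= T1 + tau/2 + R1 /\ snd p <= T2 + tau/2 + R1 /\ norm2 (sub2 p c0) > R2.
Definition S01 (p : R * R) : Prop :=
  fst p <= T1 - tau/2 /\ snd p > T2 + tau/2 + R1.
Definition S02 (p : R * R) : Prop :=
  snd p <= T2 - tau/2 /\ fst p > T1 + tau/2 + R1.
Definition Sta (p : R * R) : Prop :=
  fst p <= T1 + tau/2 + R1 /\ snd p <= T2 + tau/2 + R1
  /\ R1 <= norm2 (sub2 p c0) <= R2.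
Definition St1 (p : R * R) : Prop :=
  T1 - tau/2 <= fst p <= T1 + tau/2 /\ snd p > T2 + tau/2 + R1.
Definition St2 (p : R * R) : Prop :=
  T2 - tau/2 <= snd p <= T2 + tau/2 /\ fst p > T1 + tau/2 + R1.

Definition Sall (p : R * R) : Prop :=
  S1a p \/ S11 p \/ S12 p \/ S13 p \/ S0a p \/ S01 p \/ S02 p
  \/ Sta p \/ St1 p \/ St2 p.

Definition is_f_tau (f : R * R -> R) : Prop :=
  (forall p, S1a p \/ S11 p \/ S12 p \/ S13 p -> f p = 1) /\
  (forall p, S0a p \/ S01 p \/ S02 p -> f p = 0) /\
  (forall p, Sta p -> f p = (R2 - norm2 (sub2 p c0)) / tau) /\
  (forall p, St1 p -> f p = (fst p - (T1 - tau/2)) / tau) /\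
  (forall p, St2 p -> f p = (snd p - (T2 - tau/2)) / tau).
End Regions.

(* Main.v *)
Require Import Defs.
From Stdlib Require Import Reals Lra Psatz.
Open Scope R_scope.

Lemma cs (b1 b2 w1 w2 B W : R) : 0 <= B -> 0 <= W -> B*B = b1^2+b2^2 -> W*W = w1^2+w2^2 ->
  b1*w1+b2*w2 <= B*W.
Proof.
  intros HB HW EB EW.
  assert (L: (B*W)*(B*W) - (b1*w1+b2*w2)^2 = (b1*w2-b2*w1)^2).
  { replace ((B*W)*(B*W)) with ((B*B)*(W*W)) by ring. rewrite EB, EW. ring. }
  assert (0 <= B*W) by (apply Rmult_le_pos; auto).
  destruct (Rle_dec (b1*w1+b2*w2) (B*W)) as [h|h]; auto.
  exfalso. set (s := b1*w1+b2*w2) in *. set (P := B*W) in *.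
  assert (P < s) by lra.
  assert (P*P < s*s) by (apply Rmult_le_0_lt_compat; lra).
  assert (0 <= (b1*w2-b2*w1)^2) by (apply pow2_ge_0). 
  replace (s^2) with (s*s) in L by ring. lra.
Qed.

Lemma tri (a1 a2 b1 b2 : R) :
  sqrt (a1^2+a2^2) <= sqrt (b1^2+b2^2) + sqrt ((a1-b1)^2+(a2-b2)^2).
Proof.
  set (B := sqrt (b1^2+b2^2)). set (W := sqrt ((a1-b1)^2+(a2-b2)^2)).
  assert (HB: 0 <= B) by apply sqrt_pos. assert (HW: 0 <= W) by apply sqrt_pos.
  assert (EB: B*B = b1^2+b2^2) by (apply sqrt_sqrt; apply Rplus_le_le_0_compat; apply pow2_ge_0).
  assert (EW: W*W = (a1-b1)^2+(a2-b2)^2) by (apply sqrt_sqrt; apply Rplus_le_le_0_compat; apply pow2_ge_0).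
  pose proof (cs b1 b2 (a1-b1) (a2-b2) B W HB HW EB EW).
  rewrite <- (sqrt_pow2 (B+W)) by lra.
  apply sqrt_le_1_alt.
  replace ((B+W)^2) with (B*B + W*W + 2*(B*W)) by ring. rewrite EB, EW.
  replace (a1^2+a2^2) with (b1^2+b2^2 + ((a1-b1)^2+(a2-b2)^2) + 2*(b1*(a1-b1)+b2*(a2-b2))) by ring.
  lra.
Qed.

Definition m (t : R) := Rmax 0 t.
Lemma m_lip s t : Rabs (m s - m t) <= Rabs (s - t).
Proof. unfold m, Rmax. destruct (Rle_dec 0 s), (Rle_dec 0 t); unfold Rabs;
  repeat destruct Rcase_abs; lra. Qed.

Lemma sq_le u v : Rabs u <= Rabs v -> u^2 <= v^2.
Proof. intros H. rewrite <- (pow2_abs u), <- (pow2_abs v). apply pow_incr. split; [apply Rabs_pos|auto]. Qed.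

Definition D (c1 c2 : R) (p : R*R) := sqrt ((m (c1 - fst p))^2 + (m (c2 - snd p))^2).

Lemma D_lip c1 c2 x y : Rabs (D c1 c2 x - D c1 c2 y) <= norm2 (sub2 x y).
Proof.
  unfold D, norm2, sub2; cbn [fst snd].
  set (u1 := m (c1 - fst x)). set (u2 := m (c2 - snd x)).
  set (v1 := m (c1 - fst y)). set (v2 := m (c2 - snd y)).
  assert (H: sqrt ((u1-v1)^2+(u2-v2)^2) <= sqrt ((fst x - fst y)^2 + (snd x - snd y)^2)).
  { apply sqrt_le_1_alt. apply Rplus_le_compat; apply sq_le.
    - unfold u1, v1. eapply Rle_trans. apply m_lip. right. rewrite <- Rabs_Ropp. f_equal. ring.
    - unfold u2, v2. eapply Rle_trans. apply m_lip. right. rewrite <- Rabs_Ropp. f_equal. ring. }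
  pose proof (tri u1 u2 v1 v2). pose proof (tri v1 v2 u1 u2).
  assert (E: sqrt ((v1-u1)^2+(v2-u2)^2) = sqrt ((u1-v1)^2+(u2-v2)^2)) by (f_equal; ring).
  unfold Rabs; destruct Rcase_abs; lra.
Qed.

Definition clamp t := Rmax 0 (Rmin 1 t).
Lemma clamp_lip s t : Rabs (clamp s - clamp t) <= Rabs (s - t).
Proof. unfold clamp, Rmax, Rmin. repeat destruct Rle_dec; unfold Rabs;
  repeat destruct Rcase_abs; lra. Qed.

Lemma clamp1 t : 1 <= t -> clamp t = 1.
Proof. unfold clamp, Rmax, Rmin; repeat destruct Rle_dec; lra. Qed.
Lemma clamp0 t : t <= 0 -> clamp t = 0.
Proof. unfold clamp, Rmax, Rmin; repeat destruct Rle_dec; lra. Qed.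
Lemma clampid t : 0 <= t <= 1 -> clamp t = t.
Proof. unfold clamp, Rmax, Rmin; repeat destruct Rle_dec; lra. Qed.

Lemma D_ll c1 c2 p : fst p <= c1 -> snd p <= c2 -> D c1 c2 p = norm2 (sub2 p (c1, c2)).
Proof. intros. unfold D, norm2, sub2, m; cbn [fst snd].
  rewrite !Rmax_right by lra. f_equal. ring. Qed.
Lemma D_ul c1 c2 p : fst p <= c1 -> c2 <= snd p -> D c1 c2 p = c1 - fst p.
Proof. intros. unfold D, m.
  rewrite Rmax_right by lra. rewrite (Rmax_left 0 (c2 - snd p)) by lra.
  replace ((c1 - fst p)^2 + 0^2) with ((c1 - fst p)^2) by ring. apply sqrt_pow2; lra. Qed.
Lemma D_lr c1 c2 p : c1 <= fst p -> snd p <= c2 -> D c1 c2 p = c2 - snd p.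
Proof. intros. unfold D, m.
  rewrite (Rmax_right 0 (c2 - snd p)) by lra. rewrite (Rmax_left 0 (c1 - fst p)) by lra.
  replace (0^2 + (c2 - snd p)^2) with ((c2 - snd p)^2) by ring. apply sqrt_pow2; lra. Qed.
Lemma D_ur c1 c2 p : c1 <= fst p -> c2 <= snd p -> D c1 c2 p = 0.
Proof. intros. unfold D, m.
  rewrite !Rmax_left by lra. replace (0^2+0^2) with 0 by ring. apply sqrt_0. Qed.

Lemma key (T1 T2 tau : R) (f : R * R -> R) : 0 < tau -> is_f_tau T1 T2 tau f ->
  forall p, Sall T1 T2 tau p ->
  f p = clamp ((Defs.R2 tau - D (T1 + tau/2 + Defs.R1 tau) (T2 + tau/2 + Defs.R1 tau) p) / tau).
Proof.
  intros Ht [F1 [F0 [Fa [Ft1 Ft2]]]] p Hp.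
  assert (HR: 0 < Defs.R1 tau).
  { unfold Defs.R1. apply Rdiv_lt_0_compat; auto. apply sqrt_lt_R0; lra. }
  assert (E2: Defs.R2 tau = Defs.R1 tau + tau) by reflexivity.
  assert (Ec: c0 T1 T2 tau = (T1 + tau/2 + Defs.R1 tau, T2 + tau/2 + Defs.R1 tau)) by reflexivity.

  destruct p as [p1 p2].
  unfold Sall, S1a, S11, S12, S13, S0a, S01, S02, Sta, St1, St2 in Hp; cbn [fst snd] in Hp.
  destruct Hp as [H|[H|[H|[H|[H|[H|[H|[H|[H|H]]]]]]]]].
  - rewrite F1 by (left; exact H). rewrite Ec in H.
    rewrite D_ll by (cbn; lra). symmetry; apply clamp1.
    apply (Rmult_le_reg_r tau); auto. unfold Rdiv; rewrite Rmult_assoc, Rinv_l; lra.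
  - rewrite F1 by (right; left; exact H).
    rewrite D_ul by (cbn; lra). symmetry; apply clamp1. cbn.
    apply (Rmult_le_reg_r tau); auto. unfold Rdiv; rewrite Rmult_assoc, Rinv_l; lra.
  - rewrite F1 by (right; right; left; exact H).
    rewrite D_lr by (cbn; lra). symmetry; apply clamp1. cbn.
    apply (Rmult_le_reg_r tau); auto. unfold Rdiv; rewrite Rmult_assoc, Rinv_l; lra.
  - rewrite F1 by (right; right; right; exact H).
    rewrite D_ur by (cbn; lra). symmetry; apply clamp1.
    apply (Rmult_le_reg_r tau); auto. unfold Rdiv; rewrite Rmult_assoc, Rinv_l; lra.
  - rewrite F0 by (left; exact H). rewrite Ec in H.
    rewrite D_ll by (cbn; lra). symmetry; apply clamp0.
    apply (Rmult_le_reg_r tau); auto. unfold Rdiv; rewrite Rmult_assoc, Rinv_l; lra.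
  - rewrite F0 by (right; left; exact H).
    rewrite D_ul by (cbn; lra). symmetry; apply clamp0. cbn.
    apply (Rmult_le_reg_r tau); auto. unfold Rdiv; rewrite Rmult_assoc, Rinv_l; lra.
  - rewrite F0 by (right; right; exact H).
    rewrite D_lr by (cbn; lra). symmetry; apply clamp0. cbn.
    apply (Rmult_le_reg_r tau); auto. unfold Rdiv; rewrite Rmult_assoc, Rinv_l; lra.
  - rewrite Fa by exact H. rewrite Ec in *.
    rewrite D_ll by (cbn; lra). symmetry; apply clampid.
    split; apply (Rmult_le_reg_r tau); auto; unfold Rdiv; rewrite Rmult_assoc, Rinv_l; lra.
  - rewrite Ft1 by exact H.
    rewrite D_ul by (cbn; lra). cbn. rewrite clampid.
    + f_equal. lra.
    + split; apply (Rmult_le_reg_r tau); auto; unfold Rdiv; rewrite Rmult_assoc, Rinv_l; lra.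
  - rewrite Ft2 by exact H.
    rewrite D_lr by (cbn; lra). cbn. rewrite clampid.
    + f_equal. lra.
    + split; apply (Rmult_le_reg_r tau); auto; unfold Rdiv; rewrite Rmult_assoc, Rinv_l; lra.
Qed.

Theorem mainTheorem9 (T1 T2 tau : R) (f : R * R -> R) :
  0 < T1 -> 0 < T2 -> 0 < tau -> tau < 2 * Rmin T1 T2 ->
  is_f_tau T1 T2 tau f ->
  forall x x' : R * R, Sall T1 T2 tau x -> Sall T1 T2 tau x' ->
    Rabs (f x - f x') <= / tau * norm2 (sub2 x x').
Proof.
  intros _ _ Ht _ Hf x x' Hx Hx'.
  rewrite (key T1 T2 tau f Ht Hf x Hx), (key T1 T2 tau f Ht Hf x' Hx').
  eapply Rle_trans. apply clamp_lip.
  set (c1 := T1 + tau/2 + Defs.R1 tau). set (c2 := T2 + tau/2 + Defs.R1 tau).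
  replace ((Defs.R2 tau - D c1 c2 x) / tau - (Defs.R2 tau - D c1 c2 x') / tau)
    with (/ tau * (D c1 c2 x' - D c1 c2 x)) by (field; lra).
  rewrite Rabs_mult, Rabs_right by (left; apply Rinv_0_lt_compat; lra).
  apply Rmult_le_compat_l. left; apply Rinv_0_lt_compat; lra.
  rewrite Rabs_minus_sym. apply D_lip.
Qed.
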